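(* Let $X$ be a spectral space. The map $\varphi':X^{\mathrm{inv}}\to\mathcal X'(X)^{\mathrm{zar}}$, $x\mapsto \mathrm{Cl}(\{x\})$, is a topological embedding.
   Context: For a spectral space $X$, $\mathrm{Cl}$ denotes closure in its given topology, and $X^{\mathrm{inv}}$ is $X$ with the inverse topology, i.e. the topology having the quasi-compact open subsets of $X$ as a basis of closed sets. $\mathcal X'(X)$ is the set of nonempty closed subsets of $X$; its Zariski topology has as basis of open sets the sets $\mathcal U'(\Omega):=\{Y\in\mathcal X'(X)\mid Y\cap\Omega=\emptyset\}$, where $\Omega$ ranges over quasi-compact open subsets of $X$. *)

(* Defs.v *)
From Stdlib Require Import List Classical FunctionalExtensionality PropExtensionality.
Set Implicit Arguments.

Record topology (X : Type) := {
  is_open : (X -> Prop) -> Prop;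
  open_full : is_open (fun _ => True);
  open_inter : forall U V, is_open U -> is_open V -> is_open (fun x => U x /\ V x);
  open_union : forall F : (X -> Prop) -> Prop,
      (forall U, F U -> is_open U) -> is_open (fun x => exists U, F U /\ U x)
}.

Section Topo.
Variables (X : Type) (T : topology X).

Definition closed (C : X -> Prop) : Prop := is_open T (fun x => ~ C x).

Definition closure (A : X -> Prop) : X -> Prop :=
  fun x => forall C, closed C -> (forall y, A y -> C y) -> C x.

Definition quasi_compact (K : X -> Prop) : Prop :=
  forall F : (X -> Prop) -> Prop,
    (forall U, F U -> is_open T U) ->
    (forall x, K x -> exists U, F U /\ U x) ->
    exists l : list (X -> Prop),
      (forall U, In U l -> F U) /\ (forall x, K x -> exists U, In U l /\ U x).

Definition qc_open (U : X -> Prop) : Prop := is_open T U /\ quasi_compact U.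

Definition irreducible_closed (C : X -> Prop) : Prop :=
  closed C /\ (exists x, C x) /\
  forall C1 C2, closed C1 -> closed C2 ->
    (forall x, C x -> C1 x \/ C2 x) ->
    (forall x, C x -> C1 x) \/ (forall x, C x -> C2 x).

(* Hochster's characterization of spectral spaces: T0, quasi-compact,
   quasi-compact opens closed under finite intersection and forming a basis,
   every irreducible closed subset has a (necessarily unique, by T0) generic point. *)
Definition spectral : Prop :=
  (forall x y, (forall U, is_open T U -> (U x <-> U y)) -> x = y) /\
  quasi_compact (fun _ => True) /\
  (forall U V, qc_open U -> qc_open V -> qc_open (fun x => U x /\ V x)) /\
  (forall U x, is_open T U -> U x ->
     exists V, qc_open V /\ V x /\ forall y, V y -> U y) /\
  (forall C, irreducible_closed C ->
     exists x, forall y, C y <-> closure (fun z => z = x) y).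

(* Open sets of X^inv: the topology whose closed sets are intersections of
   quasi-compact opens, i.e. opens are unions of complements of qc opens. *)
Definition inv_open (U : X -> Prop) : Prop :=
  forall x, U x -> exists O, qc_open O /\ ~ O x /\ forall y, ~ O y -> U y.

Definition Xprime : Type := { Y : X -> Prop | closed Y /\ exists y, Y y }.

Definition U' (O : X -> Prop) : Xprime -> Prop :=
  fun Y => forall y, proj1_sig Y y -> ~ O y.

Definition zar_open (W : Xprime -> Prop) : Prop :=
  forall Y, W Y -> exists O, qc_open O /\ U' O Y /\ forall Y', U' O Y' -> W Y'.

Lemma closure_closed (A : X -> Prop) : closed (closure A).
Proof.
  unfold closed.
  set (F := fun U : X -> Prop =>
              exists C, closed C /\ (forall y, A y -> C y) /\ U = (fun x => ~ C x)).
  assert (HF : forall U, F U -> is_open T U).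
  { intros U [C [HC [_ ->]]]. exact HC. }
  assert (E : (fun x => ~ closure A x) = (fun x => exists U, F U /\ U x)).
  { apply functional_extensionality; intro x; apply propositional_extensionality.
    split.
    - intro H. apply not_all_ex_not in H. destruct H as [C H].
      apply imply_to_and in H. destruct H as [HC H].
      apply imply_to_and in H. destruct H as [HA H].
      exists (fun x => ~ C x). split; [exists C; auto | exact H].
    - intros [U [[C [HC [HA ->]]] HU]] Hcl. apply HU, Hcl; assumption. }
  rewrite E. apply open_union. exact HF.
Qed.

Lemma in_closure_point (x : X) : closure (fun z => z = x) x.
Proof. intros C _ H. apply H; reflexivity. Qed.

Definition phi' (x : X) : Xprime :=
  exist _ (closure (fun z => z = x))
        (conj (closure_closed (fun z => z = x)) (@ex_intro X (closure (fun z => z = x)) x (in_closure_point (x:=x)))).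

End Topo.

(* Topological embedding, with topologies given by their open-set predicates:
   injective, continuous, and every open of the source is the preimage of an
   open of the target (i.e. homeomorphism onto the image with subspace topology). *)
Definition embedding {A B : Type} (openA : (A -> Prop) -> Prop)
  (openB : (B -> Prop) -> Prop) (f : A -> B) : Prop :=
  (forall a1 a2, f a1 = f a2 -> a1 = a2) /\
  (forall V, openB V -> openA (fun a => V (f a))) /\
  (forall U, openA U -> exists V, openB V /\ forall a, U a <-> V (f a)).

(* Main.v *)
Require Import Defs.
From Stdlib Require Import Classical FunctionalExtensionality PropExtensionality.

Lemma U'_phi (X : Type) (T : topology X) (O : X -> Prop) (x : X) :
  is_open T O -> ~ O x -> U' O (phi' T x).
Proof.
  intros HO Hx z Hz. simpl in Hz.
  apply (Hz (fun w => ~ O w)).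
  - unfold closed. assert (E : (fun w => ~ ~ O w) = O).
    { apply functional_extensionality; intro w; apply propositional_extensionality.
      split; [apply Classical_Prop.NNPP | tauto]. }
    rewrite E; exact HO.
  - intros y ->; exact Hx.
Qed.

Lemma U'_phi_inv (X : Type) (T : topology X) (O : X -> Prop) (x : X) :
  U' O (phi' T x) -> ~ O x.
Proof. intros H. apply H. simpl. apply (in_closure_point T). Qed.

Theorem mainTheorem14 (X : Type) (T : topology X) (HX : spectral T) :
  embedding (inv_open T) (@zar_open X T) (phi' T).
Proof.
  destruct HX as [HT0 _].
  split; [|split].
  - intros a1 a2 He.
    assert (Hc : closure T (fun z => z = a1) = closure T (fun z => z = a2)).
    { exact (f_equal (@proj1_sig _ _) He). }
    apply HT0; intros U HU.
    assert (key : forall b c, closure T (fun z => z = b) c -> U c -> U b).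
    { intros b c Hbc Hc'. apply Classical_Prop.NNPP; intro Hn.
      apply (Hbc (fun w => ~ U w)); auto.
      - unfold closed. assert (E : (fun w => ~ ~ U w) = U).
        { apply functional_extensionality; intro w; apply propositional_extensionality.
          split; [apply Classical_Prop.NNPP | tauto]. }
        rewrite E; exact HU.
      - intros y ->; exact Hn. }
    split; intro H.
    + apply (key a2 a1); auto. rewrite <- Hc. apply (in_closure_point T).
    + apply (key a1 a2); auto. rewrite Hc. apply (in_closure_point T).
  - intros V HV x Hx.
    destruct (HV _ Hx) as [O [HO [HOx HOV]]].
    exists O; split; [exact HO|split].
    + exact (@U'_phi_inv _ T _ _ HOx).
    + intros y Hy. apply HOV. apply U'_phi; [apply HO | exact Hy].
  - intros U HU.
    exists (fun Y => exists O, qc_open T O /\ U' O Y /\ forall y, ~ O y -> U y).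
    split.
    + intros Y [O [HO [HY HOU]]]. exists O; split; [exact HO|split; [exact HY|]].
      intros Y' HY'. exists O; auto.
    + intros a; split.
      * intros Ha. destruct (HU a Ha) as [O [HO [Hna HOU]]].
        exists O; split; [exact HO|split; [|exact HOU]].
        apply U'_phi; [apply HO | exact Hna].
      * intros [O [HO [HY HOU]]]. apply HOU. exact (@U'_phi_inv _ T _ _ HY).
Qed.
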